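(* If TDS is decidable, then for every integer $k>2$ the membership problem of the middle-$k$th Cantor set (given a rational $t\in[0,1]$, decide whether $t$ belongs to the middle-$k$th Cantor set) is decidable.
   Context: An instance of TDS consists of a rational discount factor $0<\lambda<1$, a rational target $t$, and rational weights $a,b$; it asks whether there exists $w\in\{a,b\}^\omega$ with $\sum_{i=0}^\infty w(i)\lambda^i=t$. For an integer $k>2$, the middle-$k$th Cantor set is obtained by starting with $[0,1]$ and, at each step, removing from each remaining closed interval the open middle subinterval whose length is $\frac1k$ of that interval's length (leaving two closed intervals each of relative length $\frac{k-1}{2k}$); the set is the intersection of all stages. *)

(* Defs.v *)
(* Computability is modelled by an
   explicit model of computation: Kleene's partial mu-recursive functions. *)
From HB Require Import structures.
From mathcomp Require Import all_boot all_order all_algebra.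
From mathcomp Require Import all_classical all_reals all_analysis.
From mathcomp Require Import Rstruct Rstruct_topology.


Set Implicit Arguments.
Unset Strict Implicit.
Unset Printing Implicit Defensive.

Import Order.TTheory GRing.Theory Num.Theory.

Inductive code : Type :=
| CZero
| CSucc
| CProj of nat
| CComp of code & seq code
| CPrec of code & code
| CMu of code.

Inductive eval : code -> seq nat -> nat -> Prop :=
| ev_zero xs : eval CZero xs 0
| ev_succ xs : eval CSucc xs (head 0%N xs).+1
| ev_proj i xs : eval (CProj i) xs (nth 0%N xs i)
| ev_comp f gs xs ys y :
    evals gs xs ys -> eval f ys y -> eval (CComp f gs) xs y
| ev_prec0 f g xs y :
    eval f xs y -> eval (CPrec f g) (0%N :: xs) y
| ev_precS f g n xs r y :
    eval (CPrec f g) (n :: xs) r -> eval g (n :: r :: xs) y ->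
    eval (CPrec f g) (n.+1 :: xs) y
| ev_mu f xs n :
    eval f (n :: xs) 0%N ->
    (forall m, (m < n)%N -> exists r, eval f (m :: xs) r.+1) ->
    eval (CMu f) xs n
with evals : seq code -> seq nat -> seq nat -> Prop :=
| evs_nil xs : evals [::] xs [::]
| evs_cons g gs xs y ys :
    eval g xs y -> evals gs xs ys -> evals (g :: gs) xs (y :: ys).

Definition decidable_on (T : countType) (P : T -> Prop) : Prop :=
  exists c : code, forall x : T,
    (P x -> eval c [:: pickle x] 1%N) /\ (~ P x -> eval c [:: pickle x] 0%N).

Local Open Scope classical_set_scope.
Local Open Scope ring_scope.

Definition TDS (inst : rat * rat * rat * rat) : Prop :=
  let: (lam, t, a, b) := inst in
  0 < lam < 1 /\
  exists w : nat -> rat, (forall i, w i = a \/ w i = b) /\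
    (fun n : nat => \sum_(0 <= i < n) ((ratr (w i) : Rdefinitions.R) * (ratr lam : Rdefinitions.R) ^+ i))
      @ \oo --> (ratr t : Rdefinitions.R).

(* remove the open middle subinterval of relative length 1/k from [a, b] *)
Definition cantor_split (k : nat) (ab : Rdefinitions.R * Rdefinitions.R) : seq (Rdefinitions.R * Rdefinitions.R) :=
  let: (a, b) := ab in
  let l := (b - a) * ((k%:R - 1) / (2 * k%:R)) in
  [:: (a, a + l); (b - l, b)].

Fixpoint cantor_stage (k : nat) (n : nat) : seq (Rdefinitions.R * Rdefinitions.R) :=
  match n with
  | 0%N => [:: (0, 1)]
  | n'.+1 => flatten [seq cantor_split k ab | ab <- cantor_stage k n']
  end.

Definition cantor_set (k : nat) (x : Rdefinitions.R) : Prop :=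
  forall n : nat, exists2 ab, ab \in cantor_stage k n & ab.1 <= x <= ab.2.

Definition cantor_member (k : nat) (t : rat) : Prop := cantor_set k (ratr t).

(* Main.v *)
Require Import Defs.
From mathcomp Require Import all_boot all_order all_algebra.
From mathcomp Require Import all_classical all_reals all_analysis.
From mathcomp Require Import Rstruct Rstruct_topology.
From mathcomp Require Import ring lra.
Import Order.TTheory GRing.Theory Num.Theory.

Fixpoint KC (c : nat) : Defs.code := if c is c'.+1 then CComp CSucc [:: KC c'] else CZero.
Lemma evKC c xs : Defs.eval (KC c) xs c.
Proof.
elim: c => [|c IH] /=; first by constructor.
apply: (ev_comp (ys := [:: c])); first by constructor => //; constructor.
exact: (ev_succ [:: c]).
Qed.

Lemma evP i xs y : nth 0%N xs i = y -> Defs.eval (CProj i) xs y.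
Proof. by move=> <-; constructor. Qed.

Definition ADD := CPrec (CProj 0) (CComp CSucc [:: CProj 1]).
Lemma evADD x y : Defs.eval ADD [:: x; y] (x + y).
Proof.
elim: x => [|x IH]; first by rewrite add0n; apply: ev_prec0; apply: evP.
apply: (ev_precS IH).
apply: (ev_comp (ys := [:: x + y])); first by constructor; [apply: evP|constructor].
by rewrite addSn; exact: (ev_succ [:: x + y]).
Qed.

Definition MUL := CPrec CZero (CComp ADD [:: CProj 2; CProj 1]).
Lemma evMUL x y : Defs.eval MUL [:: x; y] (x * y).
Proof.
elim: x => [|x IH]; first by rewrite mul0n; apply: ev_prec0; constructor.
apply: (ev_precS IH).
apply: (ev_comp (ys := [:: y; x * y])).
  constructor; first exact: evP.
  constructor; first exact: evP.
  constructor.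
by rewrite mulSn; apply: evADD.
Qed.

Definition POW := CPrec (KC 1) (CComp ADD [:: CProj 1; CProj 1]).
Lemma evPOW x : Defs.eval POW [:: x] (2 ^ x).
Proof.
elim: x => [|x IH]; first by rewrite expn0; apply: ev_prec0; apply: evKC.
apply: (ev_precS IH).
apply: (ev_comp (ys := [:: 2 ^ x; 2 ^ x])).
  constructor; first exact: evP.
  constructor; first exact: evP.
  constructor.
by rewrite expnS mul2n -addnn; apply: evADD.
Qed.

Lemma evC2 f a b xs u v w : Defs.eval a xs u -> Defs.eval b xs v -> Defs.eval f [:: u; v] w ->
  Defs.eval (CComp f [:: a; b]) xs w.
Proof. move=> ha hb hf; apply: (ev_comp (ys := [:: u; v])) => //; constructor => //; constructor => //; constructor. Qed.

Lemma evC1 f a xs u w : Defs.eval a xs u -> Defs.eval f [:: u] w ->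
  Defs.eval (CComp f [:: a]) xs w.
Proof. move=> ha hf; apply: (ev_comp (ys := [:: u])) => //; constructor => //; constructor. Qed.

Definition PR (a b : Defs.code) : Defs.code :=
  CComp MUL [:: CComp POW [:: a];
                CComp ADD [:: CComp ADD [:: CComp POW [:: b]; CComp POW [:: b]]; KC 1]].

Lemma evPR a b xs u v : Defs.eval a xs u -> Defs.eval b xs v ->
  Defs.eval (PR a b) xs (CodeSeq.code [:: u; v]).
Proof.
move=> ha hb; rewrite /CodeSeq.code /= muln1 -addnn -[(2 ^ v + 2 ^ v).+1]addn1.
apply: evC2; last exact: evMUL.
  apply: evC1; [exact: ha | exact: evPOW].
apply: evC2; last exact: evADD.
  apply: evC2; last exact: evADD.
  - apply: evC1; [exact: hb | exact: evPOW].
  - apply: evC1; [exact: hb | exact: evPOW].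
exact: evKC.
Qed.

Definition red (r z s : rat) : Defs.code :=
  PR (PR (PR (KC (pickle r)) (CProj 0)) (KC (pickle z))) (KC (pickle s)).

Lemma ev_red (r z s t : rat) : Defs.eval (red r z s) [:: pickle t] (pickle (r, t, z, s)).
Proof.
apply: evPR; last exact: evKC.
apply: evPR; last exact: evKC.
apply: evPR; first exact: evKC.
exact: evP.
Qed.

Lemma reduce (P : rat -> Prop) (f : rat -> rat * rat * rat * rat) (r z s : rat) :
  (forall t, f t = (r, t, z, s)) -> (forall t, P t <-> TDS (f t)) ->
  decidable_on TDS -> decidable_on P.
Proof.
move=> hf hP [c hc]; exists (CComp c [:: red r z s]) => t; split => Ht.
- have [h1 _] := hc (f t); apply: evC1; first exact: ev_red.
  by rewrite -hf; apply: h1; apply/hP.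
- have [_ h0] := hc (f t); apply: evC1; first exact: ev_red.
  by rewrite -hf; apply: h0 => /hP.
Qed.

Section MathPart.
Local Open Scope ring_scope.
Local Open Scope classical_set_scope.
Notation RR := Rdefinitions.R.

Definition dig (q : RR) (b : bool) : RR := if b then 1 - q else 0.
Definition A (q : RR) (s : seq bool) : RR := foldr (fun b acc => dig q b + q * acc) 0 s.
Definition Iv (q x : RR) (s : seq bool) : bool := (A q s <= x) && (x <= A q s + q ^+ size s).

Lemma A_ge0 q s : 0 <= q <= 1 -> 0 <= A q s.
Proof.
move=> /andP[q0 q1]; elim: s => [|b s IH] //=.
apply: addr_ge0; last exact: mulr_ge0.
by case: b => //=; rewrite subr_ge0.
Qed.

Lemma A_le1 q s : 0 <= q <= 1 -> A q s + q ^+ size s <= 1.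
Proof.
move=> /andP[q0 q1]; elim: s => [|b s IH] /=; first by rewrite expr0 add0r.
have h : q * (A q s + q ^+ size s) <= q by rewrite -[X in _ <= X]mulr1 ler_wpM2l.
rewrite exprS; case: b => /=; lra.
Qed.

Lemma A_cat q u v : A q (u ++ v) = A q u + q ^+ size u * A q v.
Proof.
elim: u => [|b u IH] /=; first by rewrite expr0 mul1r add0r.
by rewrite IH exprS; ring.
Qed.

Lemma A_sum q s : A q s = \sum_(0 <= i < size s) dig q (nth false s i) * q ^+ i.
Proof.
elim: s => [|b s IH] /=; first by rewrite big_geq.
rewrite big_nat_recl // IH /= expr0 mulr1 mulr_sumr; congr (_ + _).
by apply: eq_bigr => i _; rewrite exprS; ring.
Qed.

Lemma Iv_take q x s j : 0 <= q <= 1 -> Iv q x s -> Iv q x (take j s).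
Proof.
move=> hq; rewrite /Iv -{1 2 3}(cat_take_drop j s) A_cat size_cat exprD.
set u := take j s; set v := drop j s => /andP[h1 h2].
have h3 := A_ge0 q v hq; have h4 := A_le1 q v hq.
have qu0 : 0 <= q ^+ size u by case/andP: hq => q0 _; exact: exprn_ge0.
have h5 : 0 <= q ^+ size u * A q v by exact: mulr_ge0.
have h6 : q ^+ size u * (A q v + q ^+ size v) <= q ^+ size u.
  by rewrite -[X in _ <= X]mulr1 ler_wpM2l.
apply/andP; split; lra.
Qed.

Lemma Iv_cons q x b s : 0 < q -> Iv q x (b :: s) = Iv q ((x - dig q b) / q) s.
Proof.
move=> q0; rewrite /Iv /= exprS.
have hx : x = dig q b + q * ((x - dig q b) / q) by field; rewrite gt_eqF.
rewrite {1 2}hx; set y := (x - dig q b) / q.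
rewrite lerD2l -addrA -mulrDr lerD2l !ler_pM2l //.
Qed.

Lemma Iv_uniq q x s s' : 0 < q -> 2 * q < 1 -> size s = size s' -> Iv q x s -> Iv q x s' -> s = s'.
Proof.
move=> q0 q2; have hq : 0 <= q <= 1 by apply/andP; split; lra.
elim: s s' x => [|b s IH] [|b' s'] x //= [hs].
have key : forall (u v : seq bool) y, Iv q y (false :: u) -> Iv q y (true :: v) -> False.
  move=> u v y; rewrite /Iv /= exprS => /andP[_ h1] /andP[h2 _].
  have h7 := A_le1 q u hq; have h8 := A_ge0 q v hq.
  have h : q * (A q u + q ^+ size u) <= q by rewrite -[X in _ <= X]mulr1; apply: ler_wpM2l; [exact: ltW | lra].
  have : 0 <= q * A q v by apply: mulr_ge0; lra.
  lra.
case: b; case: b' => h h'.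
- by rewrite !Iv_cons // in h h'; rewrite (IH s' _ hs h h').
- by case: (key _ _ _ h' h).
- by case: (key _ _ _ h h').
- by rewrite !Iv_cons // in h h'; rewrite (IH s' _ hs h h').
Qed.

Definition qk (k : nat) : RR := (k%:R - 1) / (2 * k%:R).

Lemma A_rcons q s b : A q (rcons s b) = A q s + q ^+ size s * dig q b.
Proof. by rewrite -cats1 A_cat /= mulr0 addr0. Qed.

Lemma stage1 k n ab : ab \in cantor_stage k n ->
  exists s, size s = n /\ ab = (A (qk k) s, A (qk k) s + qk k ^+ n).
Proof.
elim: n ab => [|n IH] ab /=.
  by rewrite inE => /eqP ->; exists [::]; rewrite /= expr0 add0r.
case/flatten_mapP => -[a b] /IH [s [hs [-> ->]]].
rewrite /cantor_split -/(qk k) !inE => /orP[] /eqP ->.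
- exists (rcons s false); rewrite size_rcons A_rcons hs /= exprSr; split => //.
  congr pair; ring.
- exists (rcons s true); rewrite size_rcons A_rcons hs /= exprSr; split => //.
  congr pair; ring.
Qed.

Lemma stage2 k s : (A (qk k) s, A (qk k) s + qk k ^+ size s) \in cantor_stage k (size s).
Proof.
elim/last_ind: s => [|s b IH] /=; first by rewrite expr0 add0r inE.
rewrite size_rcons /=; apply/flatten_mapP; exists (A (qk k) s, A (qk k) s + qk k ^+ size s) => //.
rewrite /cantor_split -/(qk k) !inE A_rcons exprSr; apply/orP; case: b => /=; [right|left];
  apply/eqP; congr pair; ring.
Qed.

Definition rk (k : nat) : rat := (k%:R - 1) / (2 * k%:R).

Lemma ratr_rk k : ratr (rk k) = qk k :> RR.
Proof. by rewrite /rk /qk fmorph_div rmorphB rmorphM rmorph1 !rmorph_nat. Qed.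

Lemma qk_facts k : (2 < k)%N -> 0 < qk k /\ 2 * qk k < 1.
Proof.
move=> hk; have K3 : 3 <= k%:R :> RR by rewrite (ler_nat _ 3 k).
have hq : qk k * (2 * k%:R) = k%:R - 1.
  by rewrite /qk mulfVK // mulf_neq0 // gt_eqF //; lra.
split; nra.
Qed.

Lemma take_mkseq (T : Type) (f : nat -> T) n m : (n <= m)%N -> take n (mkseq f m) = mkseq f n.
Proof. by move=> h; rewrite /mkseq -map_take take_iota (minn_idPl h). Qed.

Lemma member_TDS k t : (2 < k)%N ->
  cantor_member k t <-> TDS (rk k, t, 0, 1 - rk k).
Proof.
move=> hk; have [q0 q2] := qk_facts k hk; set q := qk k in q0 q2 *.
have hq : 0 <= q <= 1 by apply/andP; split; lra.
have r0 : 0 < rk k by rewrite -(ltr_rat RR) rmorph0 ratr_rk.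
have r1 : rk k < 1 by rewrite -(ltr_rat RR) rmorph1 ratr_rk -/q; lra.
have r01 : 0 < rk k < 1 by rewrite r0 r1.
have rB : ratr (1 - rk k) = 1 - q :> RR by rewrite rmorphB rmorph1 /q -ratr_rk.
set x : RR := ratr t.
split.
- move=> hC; split => //.
  have ex n : exists s, (size s == n) && Iv q x s.
    have [ab hab hx] := hC n; have [s [hs eab]] := stage1 _ _ _ hab.
    by exists s; move: hx; rewrite eab /= /Iv hs eqxx => h; exact: h.
  pose S n := xchoose (ex n).
  have hS n : (size (S n) == n) && Iv q x (S n) := xchooseP (ex n).
  have cons i n : (i < n)%N -> nth false (S n) i = nth false (S i.+1) i.
    move=> hi; have e : take i.+1 (S n) = S i.+1.
      have /andP[/eqP s1 I1] := hS n; have /andP[/eqP s2 I2] := hS i.+1.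
      apply: (Iv_uniq _ _ _ _ q0 q2 _ (Iv_take _ _ _ _ hq I1) I2).
      by rewrite size_takel ?s1 // s2.
    by rewrite -e nth_take.
  exists (fun i => if nth false (S i.+1) i then 1 - rk k else 0); split.
    by move=> i; case: nth; [right|left].
  have -> : (fun n => \sum_(0 <= i < n) ((ratr (if nth false (S i.+1) i then 1 - rk k else 0) : RR) * ratr (rk k) ^+ i))
      = (fun n => A q (S n)).
    apply/funext => n; have /andP[/eqP sn _] := hS n.
    rewrite A_sum sn; apply: eq_big_nat => i /andP[_ hi].
    rewrite cons // ratr_rk; case: nth => /=; last by rewrite rmorph0.
    by rewrite rB.
  have hnear : \forall n \near \oo, (x - q ^+ n <= A q (S n) <= x).
    apply: nearW => n; have /andP[/eqP sn /andP[h1 h2]] := hS n.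
    by rewrite sn in h2; apply/andP; split; lra.
  have hf : (x - q ^+ n) @[n --> \oo] --> x.
    have := @cvgB RR RR^o nat \oo _ (fun _ : nat => x) (fun n => q ^+ n) x 0 (cvg_cst x) (cvg_expr (z := q) _); rewrite subr0; apply.
    by rewrite ger0_norm; lra.
  exact: (squeeze_cvgr hnear hf (cvg_cst x)).
- case=> _ [w [hw hcv]] n.
  set S := (fun m => _) in hcv.
  pose s m := mkseq (fun i => w i == 1 - rk k) m.
  have AS m : A q (s m) = S m.
    rewrite A_sum size_mkseq /S; apply: eq_big_nat => i /andP[_ hi].
    rewrite nth_mkseq // ratr_rk; case: (hw i) => ->; last by rewrite eqxx /= rB.
    have -> : (0 == 1 - rk k) = false by rewrite eq_sym subr_eq0 gt_eqF.
    by rewrite /= rmorph0.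
  exists (A q (s n), A q (s n) + q ^+ n).
    by have := stage2 k (s n); rewrite size_mkseq.
  have hm m : (n <= m)%N -> Iv q (S m) (s n).
    move=> nm; have : Iv q (S m) (s m).
      by rewrite /Iv -AS lexx lerDl exprn_ge0 //; lra.
    by move/(Iv_take _ _ _ n hq); rewrite take_mkseq.
  rewrite /= -(@norm_cvg_lim RR RR^o _ _ _ hcv) AS; apply/andP; split.
  + apply: limr_ge; first exact: (cvgP _ hcv).
    by exists n => // m /= /hm /andP[]; rewrite AS.
  + apply: limr_le; first exact: (cvgP _ hcv).
    by exists n => // m /= /hm /andP[]; rewrite size_mkseq AS.
Qed.

End MathPart.

Theorem theorem34 :
  decidable_on TDS ->
  forall k : nat, (2 < k)%N -> decidable_on (cantor_member k).
Proof.
move=> hT k hk.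
apply: (reduce (cantor_member k) (fun t => (rk k, t, 0%R, (1 - rk k)%R)) (rk k) 0%R (1 - rk k)%R) => // t.
exact: member_TDS.
Qed.
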